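(* There exists an absolute constant $U>0$ such that for every member $S_l$ of the degenerating family, every $z\in H$ with $\operatorname{Im} z<1$ and every $t\ge 0$, $$\Pi_l(z,t)\le U e^{t}.$$
   Context: Let $\{S_l\}$ be a degenerating family of hyperbolic Riemann surfaces of genus $g$ with one puncture, parametrized by $l$ near $0\in\mathbf{R}^{6g-4}$. For each $l$, $\Gamma_l$ is a Fuchsian group with $S_l\simeq H/\Gamma_l$, where $H=\{z\in\mathbf C:\operatorname{Im} z>0\}$ carries the hyperbolic metric with distance $d(\cdot,\cdot)$; $\Gamma_l$ is normalized so that it contains the parabolic element $z\mapsto z+1$, and $\Gamma_\infty$ denotes the cyclic group generated by it. For $z\in H$ and a class $[\delta]\in\Gamma_\infty\backslash\Gamma_l$, the canonical representative $\hat\delta=\hat\delta(z,[\delta])$ is the unique element of $[\delta]$ with $-\tfrac12\le \operatorname{Re}\hat\delta z<\tfrac12$. For $z$ with $\operatorname{Im} z<1$ define $\Pi_l(z,t)=\#\{[\delta]\in\Gamma_\infty\backslash\Gamma_l : d(i,\hat\delta z)\le t\}$. *)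

(* Defs.v *)
From Stdlib Require Import Reals Lra List ZArith.
Open Scope R_scope.

(* 2x2 real matrices; Gamma is a subset of SL2(R) closed under negation,
   i.e. the full preimage of a subgroup of PSL2(R). *)
Record mat2 := M2 { ma : R; mb : R; mc : R; md : R }.

Definition mI : mat2 := M2 1 0 0 1.
Definition mmul (g h : mat2) : mat2 :=
  M2 (ma g * ma h + mb g * mc h) (ma g * mb h + mb g * md h)
     (mc g * ma h + md g * mc h) (mc g * mb h + md g * md h).
Definition mopp (g : mat2) : mat2 := M2 (- ma g) (- mb g) (- mc g) (- md g).
Definition mdet (g : mat2) : R := ma g * md g - mb g * mc g.
(* inverse of a determinant-one matrix *)
Definition minv (g : mat2) : mat2 := M2 (md g) (- mb g) (- mc g) (ma g).
Definition mtr (g : mat2) : R := ma g + md g.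
Definition Tn (n : Z) : mat2 := M2 1 (IZR n) 0 1.

(* Points of H are pairs (x, y) standing for x + i y, with y > 0. *)
Definition Re (z : R * R) : R := fst z.
Definition Im (z : R * R) : R := snd z.
Definition ipt : R * R := (0, 1).

(* Moebius action z |-> (a z + b) / (c z + d) of a determinant-one matrix,
   written out in real coordinates. *)
Definition act (g : mat2) (z : R * R) : R * R :=
  let x := fst z in let y := snd z in
  let D := (mc g * x + md g) ^ 2 + (mc g * y) ^ 2 in
  (((ma g * x + mb g) * (mc g * x + md g) + ma g * mc g * y ^ 2) / D,
   mdet g * y / D).

Definition arcosh (u : R) : R := ln (u + sqrt (u ^ 2 - 1)).
Definition hdist (z w : R * R) : R :=
  arcosh (1 + ((Re z - Re w) ^ 2 + (Im z - Im w) ^ 2) / (2 * Im z * Im w)).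

(* Gamma_infty = <z |-> z+1> in PSL2(R), i.e. {+-T^n} in SL2(R);
   two elements lie in the same class of Gamma_infty \ Gamma. *)
Definition same_coset (d d' : mat2) : Prop :=
  exists n : Z, d' = mmul (Tn n) d \/ d' = mopp (mmul (Tn n) d).

Definition is_SL2_subgroup (G : mat2 -> Prop) : Prop :=
  G mI /\
  (forall g h, G g -> G h -> G (mmul g h)) /\
  (forall g, G g -> G (minv g)) /\
  (forall g, G g -> G (mopp g)) /\
  (forall g, G g -> mdet g = 1).

Definition is_discrete (G : mat2 -> Prop) : Prop :=
  exists eps, 0 < eps /\ forall g, G g -> g <> mI ->
    eps <= Rabs (ma g - 1) + Rabs (mb g) + Rabs (mc g) + Rabs (md g - 1).

(* no elliptic elements (S_l is a surface without cone points) *)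
Definition torsion_free (G : mat2 -> Prop) : Prop :=
  forall g, G g -> g <> mI -> g <> mopp mI -> 2 <= Rabs (mtr g).

Definition normalized_cusp (G : mat2 -> Prop) : Prop :=
  G (Tn 1) /\
  forall g, G g -> mc g = 0 -> exists n : Z, g = Tn n \/ g = mopp (Tn n).

(* exactly one puncture: every parabolic element is conjugate in G to
   a nontrivial power of z |-> z+1 *)
Definition one_cusp (G : mat2 -> Prop) : Prop :=
  forall g, G g -> g <> mI -> g <> mopp mI -> Rabs (mtr g) = 2 ->
    exists h (n : Z), G h /\ n <> 0%Z /\
      (g = mmul h (mmul (Tn n) (minv h)) \/
       g = mopp (mmul h (mmul (Tn n) (minv h)))).

Definition punctured_surface_group (G : mat2 -> Prop) : Prop :=
  is_SL2_subgroup G /\ is_discrete G /\ torsion_free G /\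
  normalized_cusp G /\ one_cusp G.

(* [delta] is counted in Pi(z,t): its canonical representative hat-delta
   (the element of the class with -1/2 <= Re(hat-delta z) < 1/2) satisfies
   d(i, hat-delta z) <= t. *)
Definition counted (G : mat2 -> Prop) (z : R * R) (t : R) (d : mat2) : Prop :=
  G d /\
  exists dh, same_coset d dh /\
    -1/2 <= Re (act dh z) < 1/2 /\ hdist ipt (act dh z) <= t.

(* Pi(z,t) <= N : every family of pairwise distinct classes
   [delta] in Gamma_infty \ Gamma counted in Pi(z,t) has at most N elements
   (in particular Pi(z,t) is finite). *)
Definition Pi_le (G : mat2 -> Prop) (z : R * R) (t N : R) : Prop :=
  forall s : list mat2,
    (forall d, In d s -> counted G z t d) ->
    (forall i j, (i < length s)%nat -> (j < length s)%nat -> i <> j ->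
        ~ same_coset (nth i s mI) (nth j s mI)) ->
    INR (length s) <= N.

(* Main.v *)
Require Import Defs.
From Stdlib Require Import Reals Lra Lia List ZArith.
Open Scope R_scope.

Lemma sin_sq_le_pos (u : R) : 0 <= u -> (sin u)^2 <= u^2.
Proof.
  intros Hu. assert (Hb := SIN_bound u). assert (HP := PI2_1).
  destruct (Rle_lt_dec 1 u) as [H|H].
  - nra.
  - destruct (Req_dec u 0) as [->|Hn]. rewrite sin_0; lra.
    assert (sin u < u) by (apply sin_lt_x; lra).
    assert (0 <= sin u) by (apply sin_ge_0; lra). nra.
Qed.

Lemma sin_sq_le (u : R) : (sin u)^2 <= u^2.
Proof.
  destruct (Rle_lt_dec 0 u). now apply sin_sq_le_pos.
  replace u with (- (-u)) by ring. rewrite sin_neg.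
  assert (H := sin_sq_le_pos (-u) ltac:(lra)). nra.
Qed.

Lemma atan_sep (a b : R) :
  (sin (atan a - atan b))^2 = (a - b)^2 / ((1 + a^2) * (1 + b^2)).
Proof.
  rewrite sin_minus, !sin_atan, !cos_atan.
  assert (Ha : 0 < 1 + a²) by (unfold Rsqr; nra). assert (Hb : 0 < 1 + b²) by (unfold Rsqr; nra).
  assert (Sa := sqrt_lt_R0 _ Ha). assert (Sb := sqrt_lt_R0 _ Hb).
  assert (Qa := Rsqr_sqrt (1 + a²) ltac:(lra)).
  assert (Qb := Rsqr_sqrt (1 + b²) ltac:(lra)).
  set (sa := sqrt (1 + a²)) in *. set (sb := sqrt (1 + b²)) in *.
  unfold Rsqr in *.
  replace (1 + a^2) with (sa*sa) by (rewrite Qa; ring).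
  replace (1 + b^2) with (sb*sb) by (rewrite Qb; ring).
  field. lra.
Qed.

Lemma FOP_filter {A} (P : A -> A -> Prop) (f : A -> bool) l :
  ForallOrdPairs P l -> ForallOrdPairs P (filter f l).
Proof.
  induction 1 as [|a l Hf Hl IH]; simpl. constructor.
  destruct (f a). constructor; auto.
  rewrite Forall_forall in *. intros x Hx. apply filter_In in Hx. apply Hf; tauto.
  auto.
Qed.

Lemma pack (d : R) : 0 < d -> forall n (l : list R) A B,
  (length l <= n)%nat ->
  (forall a, In a l -> A <= a <= B) ->
  ForallOrdPairs (fun a b => d <= Rabs (a - b)) l ->
  A - d <= B ->
  INR (length l) * d <= B - A + d.
Proof.
  intros Hd n. induction n as [|n IH]; intros l A B Hlen Hin Hp HAB.
  - destruct l; simpl in *; [lra | lia].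
  - destruct l as [|a l]. simpl; lra.
    inversion Hp as [|a' l' Hf Hl]; subst.
    set (f := fun x => if Rlt_dec x a then true else false).
    assert (Hlen2 := filter_length f l).
    assert (Ha := Hin a (or_introl eq_refl)).
    rewrite Forall_forall in Hf.
    assert (H1 := IH (filter f l) A (a - d) ltac:(simpl in Hlen; pose proof (filter_length_le f l); lia)).
    assert (H2 := IH (filter (fun x => negb (f x)) l) (a + d) B ltac:(simpl in Hlen; pose proof (filter_length_le (fun x => negb (f x)) l); lia)).
    simpl length. rewrite <- Hlen2. rewrite S_INR, plus_INR.
    enough (INR (length (filter f l)) * d <= a - d - A + d /\
            INR (length (filter (fun x => negb (f x)) l)) * d <= B - (a + d) + d) by lra.
    split.
    + apply H1; [| apply FOP_filter; auto | lra].
      intros x Hx. apply filter_In in Hx. destruct Hx as [Hx Hfx].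
      unfold f in Hfx. destruct (Rlt_dec x a); [|discriminate].
      assert (Hs := Hf x Hx). assert (Hx2 := Hin x (or_intror Hx)).
      rewrite Rabs_right in Hs by lra. lra.
    + apply H2; [| apply FOP_filter; auto | lra].
      intros x Hx. apply filter_In in Hx. destruct Hx as [Hx Hfx].
      unfold f in Hfx. destruct (Rlt_dec x a); [discriminate|].
      assert (Hs := Hf x Hx). assert (Hx2 := Hin x (or_intror Hx)).
      destruct (Rle_lt_dec (a - x) 0).
      * rewrite Rabs_left1 in Hs by lra. lra.
      * rewrite Rabs_right in Hs by lra. lra.
Qed.

Lemma mat_eq a b c d a' b' c' d' : a = a' -> b = b' -> c = c' -> d = d' ->
  M2 a b c d = M2 a' b' c' d'.
Proof. intros; subst; reflexivity. Qed.

Lemma mmul_assoc g h k : mmul g (mmul h k) = mmul (mmul g h) k.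
Proof. destruct g, h, k; unfold mmul; simpl; apply mat_eq; ring. Qed.

Lemma minv_l a : mdet a = 1 -> mmul (minv a) a = mI.
Proof. destruct a; unfold mdet, mmul, minv, mI; simpl; intros H; apply mat_eq; lra. Qed.

Lemma mmul_I g : mmul g mI = g.
Proof. destruct g; unfold mmul, mI; simpl; apply mat_eq; ring. Qed.

Lemma mmul_opp_l g h : mmul (mopp g) h = mopp (mmul g h).
Proof. destruct g, h; unfold mmul, mopp; simpl; apply mat_eq; ring. Qed.

Lemma Tn_in G : is_SL2_subgroup G -> G (Tn 1) -> forall n, G (Tn n).
Proof.
  intros [HI [Hm [Hi _]]] H1.
  assert (Hnat : forall k, G (Tn (Z.of_nat k))).
  { induction k. simpl. exact HI.
    replace (Tn (Z.of_nat (S k))) with (mmul (Tn (Z.of_nat k)) (Tn 1)).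
    now apply Hm.
    unfold Tn, mmul; simpl. apply mat_eq; try ring.
    change (Z.pos (Pos.of_succ_nat k)) with (Z.of_nat (S k)). rewrite <- !INR_IZR_INZ, S_INR. ring. }
  intros [|p|p].
  - exact HI.
  - rewrite <- positive_nat_Z. apply Hnat.
  - replace (Tn (Z.neg p)) with (minv (Tn (Z.pos p))).
    apply Hi. rewrite <- positive_nat_Z. apply Hnat.
    unfold minv, Tn; simpl. rewrite IZR_NEG. apply mat_eq; ring.
Qed.

Lemma key_sep G a b : punctured_surface_group G -> G a -> G b -> ~ same_coset a b ->
  1 <= Rabs (mc a * md b - mc b * md a).
Proof.
  intros [HS [_ [Htf [[HT1 Hcusp] _]]]] Ga Gb Hns.
  pose proof HS as [HI [Hm [Hi [Ho Hdet]]]].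
  set (g := mmul b (minv a)).
  assert (Gg : G g) by (apply Hm; auto).
  assert (Hc : mc g = - (mc a * md b - mc b * md a)).
  { unfold g, mmul, minv; simpl. ring. }
  assert (Hgb : mmul g a = b).
  { unfold g. rewrite <- mmul_assoc, minv_l by auto. apply mmul_I. }
  destruct (Req_dec (mc g) 0) as [H0|H0].
  - exfalso. apply Hns. destruct (Hcusp g Gg H0) as [n [Hn|Hn]]; exists n.
    + left. rewrite <- Hgb, Hn. reflexivity.
    + right. rewrite <- Hgb, Hn. apply mmul_opp_l.
  - destruct (Rle_lt_dec 1 (Rabs (mc a * md b - mc b * md a))) as [H|H]; [exact H|].
    exfalso.
    set (q := (ma g + md g) / mc g).
    set (n := (- up q)%Z).
    set (h := mmul g (Tn n)).
    assert (Gh : G h) by (apply Hm; auto; apply Tn_in; auto).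
    assert (Hch : mc h = mc g) by (unfold h, mmul, Tn; simpl; ring).
    assert (Htr : mtr h = mc g * (q + IZR n)).
    { unfold h, mtr, mmul, Tn, q; simpl. field. exact H0. }
    assert (Hup := archimed q).
    unfold n in Htr. rewrite opp_IZR in Htr.
    assert (Hq : Rabs (q + - IZR (up q)) <= 1).
    { apply Rabs_le; lra. }
    assert (Hcl : Rabs (mc g) < 1) by (rewrite Hc, Rabs_Ropp; exact H).
    assert (Habs : Rabs (mtr h) < 2).
    { rewrite Htr, Rabs_mult.
      assert (0 <= Rabs (mc g)) by apply Rabs_pos.
      assert (0 <= Rabs (q + - IZR (up q))) by apply Rabs_pos. nra. }
    assert (2 <= Rabs (mtr h)).
    { apply Htf; auto.
      - intro E. rewrite E in Hch. unfold mI in Hch; simpl in Hch. apply H0; auto.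
      - intro E. rewrite E in Hch. unfold mI, mopp in Hch; simpl in Hch. apply H0. lra. }
    lra.
Qed.

Lemma hd_bound (X v t : R) : 0 < v ->
  arcosh (1 + ((0 - X) ^ 2 + (1 - v) ^ 2) / (2 * 1 * v)) <= t ->
  1 <= 2 * v * exp t.
Proof.
  intros Hv H. unfold arcosh in H.
  set (u := 1 + ((0 - X) ^ 2 + (1 - v) ^ 2) / (2 * 1 * v)) in *.
  assert (Hu : 1 / (2 * v) <= u).
  { assert (E : u = 1 / (2 * v) + v / 2 + X^2 / (2 * v)) by (unfold u; field; lra).
    rewrite E. assert (0 <= X^2 / (2*v)) by (unfold Rdiv; apply Rmult_le_pos; [nra | left; apply Rinv_0_lt_compat; lra]). lra. }
  assert (Hpos : 0 < 1 / (2 * v)) by (apply Rdiv_lt_0_compat; lra).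
  assert (Hs := sqrt_pos (u ^ 2 - 1)).
  assert (Hw : u + sqrt (u ^ 2 - 1) <= exp t).
  { rewrite <- (exp_ln (u + sqrt (u^2 - 1))) by lra.
    destruct (Rle_lt_or_eq_dec _ _ H) as [Hl|He].
    left. apply exp_increasing. exact Hl. rewrite He. lra. }
  assert (1 / (2 * v) <= exp t) by lra.
  apply Rmult_le_reg_r with (/ (2 * v)). apply Rinv_0_lt_compat; lra.
  replace (2 * v * exp t * / (2 * v)) with (exp t) by (field; lra). lra.
Qed.

Lemma counted_bound G z t d : punctured_surface_group G -> 0 < Im z ->
  counted G z t d ->
  (mc d * Re z + md d)^2 + (mc d * Im z)^2 <= 2 * Im z * exp t.
Proof.
  intros HP Hy [Gd [dh [[n Hn] [_ Hd]]]].
  pose proof HP as [HS [_ [_ [[HT1 _] _]]]].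
  pose proof HS as [HI [Hm [Hi [Ho Hdet]]]].
  assert (Gdh : G dh).
  { destruct Hn as [->| ->]. apply Hm; auto; apply Tn_in; auto.
    apply Ho, Hm; auto; apply Tn_in; auto. }
  assert (Hdd : mdet d = 1) by auto.
  assert (HD : (mc dh * Re z + md dh)^2 + (mc dh * Im z)^2 =
               (mc d * Re z + md d)^2 + (mc d * Im z)^2).
  { destruct Hn as [->| ->]; unfold mopp, mmul, Tn; simpl; ring. }
  rewrite <- HD. clear HD.
  assert (Hdet1 : mdet dh = 1) by auto.
  set (D := (mc dh * Re z + md dh)^2 + (mc dh * Im z)^2).
  assert (HDp : 0 < D).
  { unfold D. destruct (Req_dec (mc dh) 0) as [Hc|Hc].
    - rewrite Hc. unfold mdet in Hdet1. rewrite Hc in Hdet1.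
      assert (md dh <> 0) by (intro E; rewrite E in Hdet1; lra).
      assert (0 < md dh * md dh) by (apply Rsqr_pos_lt; auto). nra.
    - assert (mc dh * Im z <> 0) by (intro E; apply Rmult_integral in E; lra). assert (0 < (mc dh * Im z) * (mc dh * Im z)) by (apply Rsqr_pos_lt; auto).
      assert (0 <= (mc dh * Re z + md dh)^2) by apply pow2_ge_0.
      replace ((mc dh * Im z)^2) with ((mc dh * Im z) * (mc dh * Im z)) by ring. lra. }
  unfold hdist, act, ipt, Re, Im in Hd; simpl in Hd.
  fold (Re z) (Im z) in Hd.
  replace ((mc dh * Re z + md dh) ^ 2 + (mc dh * Im z) ^ 2) with D in Hd by reflexivity.
  rewrite Hdet1, Rmult_1_l in Hd.
  assert (Hv : 0 < Im z / D) by (apply Rdiv_lt_0_compat; lra).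
  assert (H := hd_bound _ _ t Hv Hd).
  apply Rmult_le_reg_r with (/ D). apply Rinv_0_lt_compat; lra.
  replace (D * / D) with 1 by (field; lra).
  replace (2 * Im z * exp t * / D) with (2 * (Im z / D) * exp t) by (field; lra). exact H.
Qed.

Lemma sep_real (ca ea cb eb x y T : R) : 0 < y -> 0 < T -> ca <> 0 -> cb <> 0 ->
  (ca * x + ea)^2 + (ca * y)^2 <= 2 * y * T ->
  (cb * x + eb)^2 + (cb * y)^2 <= 2 * y * T ->
  1 <= Rabs (ca * eb - cb * ea) ->
  1 / (2 * T) <= Rabs (atan ((ca * x + ea) / (ca * y)) - atan ((cb * x + eb) / (cb * y))).
Proof.
  intros Hy HT Ha Hb Da Db Hdet.
  set (sa := (ca * x + ea) / (ca * y)). set (sb := (cb * x + eb) / (cb * y)).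
  assert (Ea : (ca * y)^2 * (1 + sa^2) = (ca * x + ea)^2 + (ca * y)^2) by (unfold sa; field; repeat split; try lra; auto).
  assert (Eb : (cb * y)^2 * (1 + sb^2) = (cb * x + eb)^2 + (cb * y)^2) by (unfold sb; field; repeat split; try lra; auto).
  assert (Ed : (sa - sb) * (ca * y) * (cb * y) = y * (ea * cb - eb * ca)) by (unfold sa, sb; field; repeat split; try lra; auto).
  assert (Hd2 : 1 <= (ca * eb - cb * ea)^2).
  { rewrite <- Rsqr_pow2, Rsqr_abs. rewrite Rsqr_pow2. nra. }
  assert (Pa : 0 < 1 + sa^2) by nra. assert (Pb : 0 < 1 + sb^2) by nra.
  assert (Qa : 0 <= (ca*y)^2) by nra. assert (Qb : 0 <= (cb*y)^2) by nra.
  set (P := (1 + sa^2) * (1 + sb^2)).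
  assert (HP : (ca*y)^2 * (cb*y)^2 * P <= 4 * y^2 * T^2).
  { unfold P. replace ((ca*y)^2 * (cb*y)^2 * ((1 + sa^2) * (1 + sb^2))) with
      (((ca*y)^2 * (1 + sa^2)) * ((cb*y)^2 * (1 + sb^2))) by ring.
    rewrite Ea, Eb.
    assert (0 <= (ca * x + ea)^2 + (ca * y)^2) by nra.
    assert (0 <= (cb * x + eb)^2 + (cb * y)^2) by nra. nra. }
  assert (Hsq : ((sa - sb) * (ca * y) * (cb * y))^2 >= y^2) by (rewrite Ed; replace ((y * (ea * cb - eb * ca))^2) with (y^2 * (ca * eb - cb * ea)^2) by ring; assert (0 < y^2) by nra; nra).
  assert (HPpos : 0 < P) by (unfold P; nra).
  assert (Key : P <= 4 * T^2 * (sa - sb)^2).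
  { apply Rmult_le_reg_l with (y^2). nra.
    apply Rle_trans with (((sa - sb) * (ca * y) * (cb * y))^2 * P). nra.
    replace (((sa - sb) * (ca * y) * (cb * y))^2 * P) with ((sa - sb)^2 * ((ca*y)^2 * (cb*y)^2 * P)) by ring.
    assert (0 <= (sa - sb)^2) by apply pow2_ge_0.
    replace (y ^ 2 * (4 * T ^ 2 * (sa - sb) ^ 2)) with ((sa - sb)^2 * (4 * y^2 * T^2)) by ring.
    apply Rmult_le_compat_l; assumption. }
  assert (Hs := atan_sep sa sb). fold P in Hs.
  assert (Hsl := sin_sq_le (atan sa - atan sb)).
  set (u := atan sa - atan sb) in *.
  assert (Hu : 1 / (4 * T^2) <= u^2).
  { apply Rle_trans with ((sin u)^2); [|exact Hsl]. rewrite Hs.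
    apply Rmult_le_reg_r with (4 * T^2 * P). { assert (0 < T^2) by (apply pow_lt; lra). apply Rmult_lt_0_compat; lra. }
    replace (1 / (4 * T ^ 2) * (4 * T ^ 2 * P)) with P by (field; lra).
    replace ((sa - sb) ^ 2 / P * (4 * T ^ 2 * P)) with (4 * T^2 * (sa - sb)^2) by (field; lra).
    exact Key. }
  assert (Hpos : 0 < 1 / (2 * T)) by (apply Rdiv_lt_0_compat; lra).
  destruct (Rle_lt_dec (1 / (2*T)) (Rabs u)) as [H|H]; [exact H|].
  exfalso. assert (Habs := Rabs_pos u).
  assert (u^2 = Rabs u * Rabs u) by (rewrite <- Rsqr_pow2, Rsqr_abs; reflexivity).
  assert (1 / (4 * T^2) = (1 / (2*T)) * (1 / (2*T))) by (field; lra).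
  nra.
Qed.

Lemma FOP_map {A B} (P : A -> A -> Prop) (Q : B -> B -> Prop) (g : A -> B) l :
  ForallOrdPairs P l ->
  (forall a b, In a l -> In b l -> P a b -> Q (g a) (g b)) ->
  ForallOrdPairs Q (map g l).
Proof.
  induction 1 as [|a l Hf Hl IH]; intros H; simpl. constructor.
  constructor.
  - rewrite Forall_forall in *. intros y Hy. apply in_map_iff in Hy.
    destruct Hy as [x [<- Hx]]. apply H; simpl; auto.
  - apply IH. intros; apply H; simpl; auto.
Qed.

Lemma FOP_of_nth {A} (P : A -> A -> Prop) (dflt : A) l :
  (forall i j, (i < length l)%nat -> (j < length l)%nat -> i <> j -> P (nth i l dflt) (nth j l dflt)) ->
  ForallOrdPairs P l.
Proof.
  induction l as [|a l IH]; intros H. constructor.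
  constructor.
  - rewrite Forall_forall. intros x Hx. apply In_nth with (d := dflt) in Hx.
    destruct Hx as [k [Hk <-]]. apply (H 0%nat (S k)); simpl; lia.
  - apply IH. intros i j Hi Hj Hij. apply (H (S i) (S j)); simpl; lia.
Qed.

Lemma count_mats (x y T : R) (s : list mat2) : 0 < y -> 1 <= T ->
  (forall d, In d s -> (mc d * x + md d)^2 + (mc d * y)^2 <= 2 * y * T) ->
  ForallOrdPairs (fun a b => 1 <= Rabs (mc a * md b - mc b * md a)) s ->
  INR (length s) <= 2 * PI * T + 2.
Proof.
  intros Hy HT Hin Hp.
  set (f := fun d => if Req_EM_T (mc d) 0 then true else false).
  rewrite <- (filter_length f s), plus_INR.
  assert (H0 : (length (filter f s) <= 1)%nat).
  { assert (Hq := FOP_filter _ f _ Hp).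
    destruct (filter f s) as [|a [|b r]] eqn:E; simpl; try lia.
    exfalso. inversion Hq as [|a' l' Hf Hl]; subst. inversion Hf as [|b' r' Hab]; subst.
    assert (Ha : In a (filter f s)) by (rewrite E; simpl; auto).
    assert (Hb : In b (filter f s)) by (rewrite E; simpl; auto).
    apply filter_In in Ha, Hb. unfold f in Ha, Hb.
    destruct (Req_EM_T (mc a) 0) as [Ea|]; [|destruct Ha; discriminate].
    destruct (Req_EM_T (mc b) 0) as [Eb|]; [|destruct Hb; discriminate].
    rewrite Ea, Eb in Hab. rewrite !Rmult_0_l, Rminus_0_r, Rabs_R0 in Hab. lra. }
  apply le_INR in H0. simpl INR in H0.
  set (s1 := filter (fun d => negb (f d)) s).
  set (al := fun d => atan ((mc d * x + md d) / (mc d * y))).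
  assert (Hd : 0 < 1 / (2 * T)) by (apply Rdiv_lt_0_compat; lra).
  assert (Hpk := pack (1 / (2 * T)) Hd (length (map al s1)) (map al s1) (- PI / 2) (PI / 2) (le_n _)).
  rewrite length_map in Hpk.
  assert (Hs1 : INR (length s1) * (1 / (2 * T)) <= PI / 2 - - PI / 2 + 1 / (2 * T)).
  { apply Hpk.
    - intros a Ha. apply in_map_iff in Ha. destruct Ha as [d [<- _]].
      unfold al. destruct (atan_bound ((mc d * x + md d) / (mc d * y))). lra.
    - apply FOP_map with (P := fun a b => 1 <= Rabs (mc a * md b - mc b * md a)).
      apply FOP_filter, Hp.
      intros a b Ha Hb Hab. unfold s1 in Ha, Hb. apply filter_In in Ha, Hb.
      destruct Ha as [Ha Fa]. destruct Hb as [Hb Fb]. unfold f in Fa, Fb.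
      destruct (Req_EM_T (mc a) 0); [discriminate|].
      destruct (Req_EM_T (mc b) 0); [discriminate|].
      unfold al. apply sep_real; auto; lra.
    - assert (HPI := PI_RGT_0). lra. }
  assert (INR (length s1) <= 2 * PI * T + 1).
  { replace (PI / 2 - - PI / 2 + 1 / (2 * T)) with ((2 * PI * T + 1) * (1 / (2 * T))) in Hs1 by (field; lra).
    apply Rmult_le_reg_r in Hs1; auto. }
  fold s1. lra.
Qed.

Theorem proposition2p1 :
  forall (L : Type) (Gamma : L -> mat2 -> Prop),
    (forall l, punctured_surface_group (Gamma l)) ->
    exists U : R, 0 < U /\
      forall (l : L) (z : R * R) (t : R),
        0 < Im z -> Im z < 1 -> 0 <= t ->
        Pi_le (Gamma l) z t (U * exp t).
Proof.
  intros L Gamma HG. exists 10. split. lra.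
  intros l z t Hy _ Ht s Hc Hd.
  assert (HT : 1 <= exp t).
  { rewrite <- exp_0. destruct Ht as [Ht| <-]. left; apply exp_increasing; auto. lra. }
  assert (Hcnt := count_mats (Re z) (Im z) (exp t) s Hy HT).
  assert (INR (length s) <= 2 * PI * exp t + 2).
  { apply Hcnt.
    - intros d Hin. apply (counted_bound (Gamma l)); auto.
    - apply FOP_of_nth with (dflt := mI). intros i j Hi Hj Hij.
      apply (key_sep (Gamma l)); auto.
      + apply Hc, nth_In, Hi.
      + apply Hc, nth_In, Hj. }
  assert (HPI := PI_4). assert (PI * exp t <= 4 * exp t) by (apply Rmult_le_compat_r; lra). lra.
Qed.
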